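(* Let $I=\{1,\dots,k+\ell\}\subseteq V$ where $C_1=\{1,\dots,k\}$ and $C_2=\{k+1,\dots,k+\ell\}$ are disjoint cliques of $G$ with no edges between $C_1$ and $C_2$. Let $X_I$ be a symmetric matrix with $X_I\succeq 0$, $X_I\geq 0$ (entrywise), diagonal entries $x_1,\dots,x_{k+\ell}$, $(X_I)_{i,j}=0$ whenever $i\neq j$ lie in the same clique $C_1$ or $C_2$, and entries $X_{i,k+j}$ for $1\leq i\leq k$, $1\leq j\leq \ell$. Then $X_I\in\mathrm{STAB}^2(G_I)$ if and only if $$\sum_{j=1}^{\ell}X_{i,k+j}\leq x_i\ (1\leq i\leq k),\qquad \sum_{i=1}^{k}X_{i,k+j}\leq x_{k+j}\ (1\leq j\leq \ell),\qquad \sum_{i=1}^{k+\ell}x_i\leq 1+\sum_{i=1}^k\sum_{j=1}^{\ell}X_{i,k+j}.$$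
   Context: Let $G$ be a simple graph with vertex set $V=\{1,\dots,n\}$ and edge set $E$; $G_I$ denotes the subgraph induced by $I\subseteq V$. For a graph $H$ with vertex set $I$, let $S(H)=\{s\in\{0,1\}^I: s_is_j=0\ \forall [i,j]\in E(H)\}$ (incidence vectors of stable sets, including the zero vector) and $\mathrm{STAB}^2(H)=\operatorname{conv}\{ss^T: s\in S(H)\}$. *)

(* Defs.v *)
From mathcomp Require Import all_boot all_order all_algebra.
From mathcomp Require Import reals.
Set Implicit Arguments. Unset Strict Implicit. Unset Printing Implicit Defensive.
Import Order.TTheory GRing.Theory Num.Theory.
Local Open Scope ring_scope.

Definition simple_graph (T : finType) (e : rel T) : Prop :=
  (forall x y, e x y = e y x) /\ (forall x, ~~ e x x).

(* Induced subgraph G_I on I = {0,..,m-1} (first m vertices) of a graph on 'I_n. *)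
Definition induced_first (n m : nat) (hmn : (m <= n)%N) (e : rel 'I_n) : rel 'I_m :=
  fun i j => e (widen_ord hmn i) (widen_ord hmn j).

Definition stable_vec (m : nat) (e : rel 'I_m) (s : {ffun 'I_m -> bool}) : bool :=
  [forall i, forall j, e i j ==> ~~ (s i && s j)].

Definition outer01 (R : ringType) (m : nat) (s : {ffun 'I_m -> bool}) : 'M[R]_m :=
  \matrix_(i, j) ((s i)%:R * (s j)%:R).

Definition STAB2 (R : realType) (m : nat) (e : rel 'I_m) (X : 'M[R]_m) : Prop :=
  exists lam : {ffun {ffun 'I_m -> bool} -> R},
    (forall s, 0 <= lam s) /\
    (forall s, ~~ stable_vec e s -> lam s = 0) /\
    \sum_s lam s = 1 /\
    X = \sum_s lam s *: outer01 R s.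

Definition psd (R : realType) (m : nat) (X : 'M[R]_m) : Prop :=
  X^T = X /\ forall v : 'cV[R]_m, 0 <= (v^T *m X *m v) 0 0.

(* Main.v *)
Require Import Defs.
From mathcomp Require Import all_boot all_order all_algebra.
From mathcomp Require Import reals.
From mathcomp Require Import ring lra.
Import Order.TTheory GRing.Theory Num.Theory.
Local Open Scope ring_scope.

Lemma big_opt (R : nmodType) (T : finType) (F : option T -> R) :
  \sum_o F o = F None + \sum_t F (Some t).
Proof.
rewrite (bigD1 None) //=; congr (_ + _).
rewrite (reindex_omap Some id); last by case.
by apply: eq_bigl => t; rewrite /= eqxx.
Qed.

Lemma sum_delta (R : realType) (T : finType) (a : T) (F : T -> R) :
  \sum_t (t == a)%:R * F t = F a.
Proof.
rewrite (bigD1 a) //= eqxx mul1r big1 ?addr0 // => t /negbTE ->.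
by rewrite mul0r.
Qed.

Lemma sum_delta' (R : realType) (T : finType) (a : T) (F : T -> R) :
  \sum_t F t * (t == a)%:R = F a.
Proof. by rewrite -[RHS](@sum_delta R T a); apply: eq_bigr => t _; rewrite mulrC. Qed.

Lemma bb (R : realType) (b : bool) : (b%:R * b%:R : R) = b%:R.
Proof. by case: b; rewrite ?mulr1 ?mulr0. Qed.

Lemma sum_le1 (R : realType) (T : finType) (b : T -> bool) :
  (forall x y, b x -> b y -> x = y) -> \sum_x (b x)%:R <= 1 :> R.
Proof.
move=> H; case: (pickP b) => [x bx|nb].
  rewrite (bigD1 x) //= bx big1 ?addr0 // => y yx.
  by case: (boolP (b y)) => // by_; move: yx; rewrite (H _ _ by_ bx) eqxx.
by rewrite big1 // => y _; rewrite nb.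
Qed.

Lemma sum_ge0b (R : realType) (T : finType) (b : T -> bool) :
  0 <= \sum_x (b x)%:R :> R.
Proof. by apply: sumr_ge0 => x _; rewrite ler0n. Qed.

Lemma sum_deltaC (R : realType) (T : finType) (a : T) (c : R) :
  \sum_t c * (t == a)%:R = c.
Proof. exact: (@sum_delta' R T a (fun _ => c)). Qed.

Lemma sum_delta2 (R : realType) (T : finType) (a : T) (c : R) (F : T -> R) :
  \sum_t c * (t == a)%:R * F t = c * F a.
Proof.
rewrite -[RHS](@sum_delta R T a (fun t => c * F t)).
by apply: eq_bigr => t _; rewrite mulrCA mulrA.
Qed.

Section Pairs.
Variables (R : realType) (A B : finType) (F : A -> B -> R).

Lemma L1 x y : \sum_a \sum_b F a b * ((a == x)%:R * (b == y)%:R) = F x y.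
Proof.
rewrite -[RHS](@sum_delta R A x (fun a => F a y)).
apply: eq_bigr => a _.
rewrite -[RHS](@sum_delta R B y (fun b => (a == x)%:R * F a b)).
by apply: eq_bigr => b _; ring.
Qed.

Lemma L2 x y : \sum_a \sum_b F a b * ((b == y)%:R * (a == x)%:R) = F x y.
Proof. by rewrite -L1; apply: eq_bigr => a _; apply: eq_bigr => b _; rewrite [_ * (a == x)%:R]mulrC. Qed.

Lemma L3 x : \sum_a \sum_b F a b * ((a == x)%:R * (a == x)%:R) = \sum_b F x b.
Proof.
rewrite -[RHS](@sum_delta R A x (fun a => \sum_b F a b)).
apply: eq_bigr => a _; rewrite bb mulr_sumr.
by apply: eq_bigr => b _; rewrite mulrC.
Qed.

Lemma L4 y : \sum_a \sum_b F a b * ((b == y)%:R * (b == y)%:R) = \sum_a F a y.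
Proof.
apply: eq_bigr => a _; rewrite -[RHS](@sum_delta R B y (fun b => F a b)).
by apply: eq_bigr => b _; rewrite bb mulrC.
Qed.

Lemma L0 x x' : x != x' -> \sum_a \sum_b F a b * ((a == x)%:R * (a == x')%:R) = 0.
Proof.
move=> nx; rewrite big1 // => a _; rewrite big1 // => b _.
case: (a =P x) => [->|_]; last by rewrite mul0r mulr0.
by rewrite (negbTE nx) mulr0 mulr0.
Qed.

Lemma L0' y y' : y != y' -> \sum_a \sum_b F a b * ((b == y)%:R * (b == y')%:R) = 0.
Proof.
move=> ny; rewrite big1 // => a _; rewrite big1 // => b _.
case: (b =P y) => [->|_]; last by rewrite mul0r mulr0.
by rewrite (negbTE ny) mulr0 mulr0.
Qed.
End Pairs.
Theorem lemmaL5 (R : realType) (n k l : nat) (hI : (k + l <= n)%N)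
  (e : rel 'I_n) (X : 'M[R]_(k + l)) :
  simple_graph e ->
  (* C1 = first k vertices, C2 = next l vertices: cliques, no edges between *)
  (forall i j : 'I_(k + l), i != j -> (i < k)%N -> (j < k)%N ->
     induced_first hI e i j) ->
  (forall i j : 'I_(k + l), i != j -> (k <= i)%N -> (k <= j)%N ->
     induced_first hI e i j) ->
  (forall i j : 'I_(k + l), (i < k)%N -> (k <= j)%N ->
     ~~ induced_first hI e i j) ->
  psd X ->
  (forall i j, 0 <= X i j) ->
  (forall i j : 'I_(k + l), i != j -> ((i < k)%N = (j < k)%N) -> X i j = 0) ->
  (STAB2 (induced_first hI e) X <->
   [/\ forall i : 'I_k,
         \sum_(j < l) X (lshift l i) (rshift k j) <= X (lshift l i) (lshift l i),
       forall j : 'I_l,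
         \sum_(i < k) X (lshift l i) (rshift k j) <= X (rshift k j) (rshift k j)
     & \sum_(i < k + l) X i i <=
         1 + \sum_(i < k) \sum_(j < l) X (lshift l i) (rshift k j)]).
Proof.
move=> [esym eirr] H1 H2 H3 [HT _] Hnn H0.
split.
- case=> lam [lge0 [lst [lsum HX]]].
  have XE p q : X p q = \sum_s lam s * ((s p)%:R * (s q)%:R).
    by rewrite HX summxE; apply: eq_bigr => s _; rewrite !mxE.
  pose a (s : {ffun 'I_(k + l) -> bool}) := \sum_(i < k) ((s (lshift l i))%:R : R).
  pose b (s : {ffun 'I_(k + l) -> bool}) := \sum_(j < l) ((s (rshift k j))%:R : R).
  have ab s : lam s = 0 \/ (a s <= 1 /\ b s <= 1).
    case: (boolP (stable_vec (induced_first hI e) s)) => st; last by left; apply: lst.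
    right; split; apply: sum_le1 => x y sx sy; apply/eqP; apply/negPn/negP => nxy.
    + move/forallP: st => /(_ (lshift l x)) /forallP /(_ (lshift l y)) /implyP.
      rewrite H1 /= ?ltn_ord ?(inj_eq (@lshift_inj _ _)) // => /(_ isT).
      by rewrite sx sy.
    + move/forallP: st => /(_ (rshift k x)) /forallP /(_ (rshift k y)) /implyP.
      rewrite H2 /= ?leq_addr ?(inj_eq (@rshift_inj _ _)) // => /(_ isT).
      by rewrite sx sy.
  split.
  + move=> i; under eq_bigr do rewrite XE; rewrite XE exchange_big /=.
    apply: ler_sum => s _; rewrite -mulr_sumr -mulr_sumr.
    case: (ab s) => [->|[_ hb]]; first by rewrite !mul0r.
    apply: ler_wpM2l => //.
    by case: (s (lshift l i)); rewrite ?mul1r ?mul0r.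
  + move=> j; under eq_bigr do rewrite XE; rewrite XE exchange_big /=.
    apply: ler_sum => s _; rewrite -mulr_sumr.
    case: (ab s) => [->|[ha _]]; first by rewrite !mul0r.
    apply: ler_wpM2l => //; rewrite -mulr_suml.
    by case: (s (rshift k j)); rewrite ?mulr1 ?mulr0.
  + have -> : \sum_(i < k + l) X i i = \sum_s lam s * (a s + b s).
      rewrite big_split_ord /=.
      under eq_bigr do rewrite XE.
      under [X in _ + X]eq_bigr do rewrite XE.
      rewrite exchange_big [X in _ + X]exchange_big -big_split /=.
      apply: eq_bigr => s _; rewrite -!mulr_sumr -mulrDr /a /b.
      by congr (_ * (_ + _)); apply: eq_bigr => i _; rewrite bb.
    have -> : 1 + \sum_(i < k) \sum_(j < l) X (lshift l i) (rshift k j)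
        = \sum_s lam s * (1 + a s * b s).
      have -> : \sum_(i < k) \sum_(j < l) X (lshift l i) (rshift k j)
          = \sum_s lam s * (a s * b s).
        under eq_bigr => i _ do (under eq_bigr => j _ do rewrite XE; rewrite exchange_big).
        rewrite exchange_big /=.
        apply: eq_bigr => s _; rewrite /a /b mulr_suml mulr_sumr.
        apply: eq_bigr => i _; rewrite mulr_sumr mulr_sumr.
        by apply: eq_bigr => j _; rewrite mulrA.
      rewrite -[in LHS]lsum -big_split /=.
      by apply: eq_bigr => s _; rewrite mulrDr mulr1.
    apply: ler_sum => s _.
    case: (ab s) => [->|[ha hb]]; first by rewrite !mul0r.
    apply: ler_wpM2l => //.
    have := @sum_ge0b R _ (fun i => s (lshift l i)).
    have := @sum_ge0b R _ (fun j => s (rshift k j)).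
    rewrite -/(a s) -/(b s) => b0 a0.
    nra.
- case=> h1 h2 h3.
  have XS p q : X p q = X q p by rewrite -{1}HT mxE.
  pose S := \sum_(i < k) \sum_(j < l) X (lshift l i) (rshift k j).
  pose w (o : option 'I_k * option 'I_l) : R :=
    match o with
    | (None, None) => 1 - \sum_(p < k + l) X p p + S
    | (Some i, None) => X (lshift l i) (lshift l i) - \sum_(j < l) X (lshift l i) (rshift k j)
    | (None, Some j) => X (rshift k j) (rshift k j) - \sum_(i < k) X (lshift l i) (rshift k j)
    | (Some i, Some j) => X (lshift l i) (rshift k j)
    end.
  pose st (o : option 'I_k * option 'I_l) : {ffun 'I_(k + l) -> bool} :=
    [ffun p => match split p with inl i => o.1 == Some i | inr j => o.2 == Some j end].
  have stL o i : st o (lshift l i) = (o.1 == Some i).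
    by rewrite ffunE (unsplitK (inl _ i)).
  have stR o j : st o (rshift k j) = (o.2 == Some j).
    by rewrite ffunE (unsplitK (inr _ j)).
  have wge0 o : 0 <= w o.
    case: o => [[i|] [j|]] /=; rewrite ?subr_ge0 //; move: h3; rewrite /S; lra.
  have stst o : stable_vec (induced_first hI e) (st o).
    apply/forallP => p; apply/forallP => q; apply/implyP => epq.
    move: epq; rewrite -(splitK p) -(splitK q).
    case: (split p) => [i|j]; case: (split q) => [i'|j'] /=.
    + rewrite !stL => ee; apply/negP => /andP [/eqP a /eqP b].
      by move: ee; rewrite a in b; case: b => ->; rewrite /induced_first (negbTE (eirr _)).
    + by rewrite (negbTE (H3 _ _ _ _)) //= leq_addr.
    + by rewrite /induced_first esym -/(induced_first hI e _ _) (negbTE (H3 _ _ _ _)) //= leq_addr.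
    + rewrite !stR => ee; apply/negP => /andP [/eqP a /eqP b].
      by move: ee; rewrite a in b; case: b => ->; rewrite /induced_first (negbTE (eirr _)).
  pose lam := [ffun s => \sum_o w o * (s == st o)%:R].
  have expand (F : option 'I_k * option 'I_l -> R) :
      \sum_o F o = \sum_a \sum_b F (a, b).
    by rewrite pair_bigA; apply: eq_bigr => -[a b].
  exists lam; split; [|split; [|split]].
  + move=> s; rewrite ffunE; apply: sumr_ge0 => o _; by apply: mulr_ge0; rewrite ?ler0n.
  + move=> s ns; rewrite ffunE big1 // => o _.
    case: eqP => [eso|]; last by rewrite mulr0.
    by move: ns; rewrite eso stst.
  + under eq_bigr do rewrite ffunE.
    rewrite exchange_big /=.
    under eq_bigr do rewrite sum_deltaC.
    rewrite expand big_opt big_opt /=.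
    under [X in _ + X]eq_bigr do rewrite big_opt /=.
    under [X in _ + X]eq_bigr do rewrite subrK.
    have eS : \sum_(j < l) \sum_(i < k) X (lshift l i) (rshift k j) = S.
      by rewrite /S [RHS]exchange_big.
    rewrite sumrB big_split_ord /= eS.
    lra.
  + apply/matrixP => p q; rewrite summxE.
    under eq_bigr do rewrite !mxE ffunE mulr_suml.
    rewrite exchange_big /=.
    under eq_bigr do rewrite sum_delta2.
    rewrite -(splitK p) -(splitK q).
    case: (split p) => [i|j]; case: (split q) => [i'|j'] /=;
      under eq_bigr do rewrite ?stL ?stR; rewrite expand.
    * rewrite /=; case: (eqVneq i i') => [<-|nii'].
      - rewrite (@L3 R _ _ (fun a b => w (a, b))) big_opt /=.
        by rewrite subrK.
      - rewrite (@L0 R _ _ (fun a b => w (a, b))); last by rewrite (inj_eq (@Some_inj _)).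
        by rewrite H0 //= !ltn_ord.
    * by rewrite /= (@L1 R _ _ (fun a b => w (a, b))).
    * by rewrite /= (@L2 R _ _ (fun a b => w (a, b))) XS.
    * rewrite /=; case: (eqVneq j j') => [<-|njj'].
      - rewrite (@L4 R _ _ (fun a b => w (a, b))) big_opt /=.
        by rewrite subrK.
      - rewrite (@L0' R _ _ (fun a b => w (a, b))); last by rewrite (inj_eq (@Some_inj _)).
        rewrite H0 // ?(inj_eq (@rshift_inj _ _)) //=.
        by rewrite !ltnNge !leq_addr.
Qed.
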